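(* Let $\mathbf{r}(s)$ be a regular curve in $\mathbb R^3$ parametrized by arc length, with nowhere-vanishing torsion $\tau(s)$, contained in a circular cylinder of radius $\rho>0$. If the curvature is a non-zero constant $\kappa(s)=\kappa_0$, then one of the following holds: (1) $\mathbf{r}$ is a circular helix (i.e. $\tau$ is also constant); (2) the torsion $\tau$ is not constant and it satisfies the first-order differential equation $$\frac{\rho^4\tau'^2}{9-4\rho^2\tau^2}=\rho^2\kappa_0^2-\frac12+\frac{\rho^2\tau^2}{9}\mp\frac16\sqrt{9-4\rho^2\tau^2}$$ (for one choice of the sign $\mp$). In particular, in this case it is necessary that $|\tau|\le \frac{3}{2\rho}$.
   Context: Primes denote derivatives with respect to arc length $s$. A circular cylinder of radius $\rho$ is $\{\mathbf{x}:\|\mathbf{x}\|^2-\langle\mathbf{x},\mathbf{a}\rangle^2=\rho^2\}$ for a unit vector $\mathbf{a}$ (up to rigid motion). *)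

(* Defs.v *)
From Stdlib Require Import Reals.
From Coquelicot Require Import Coquelicot.
Open Scope R_scope.

Definition V3 := (R * R * R)%type.
Definition vx (v : V3) : R := fst (fst v).
Definition vy (v : V3) : R := snd (fst v).
Definition vz (v : V3) : R := snd v.
Definition mkV3 (x y z : R) : V3 := ((x, y), z).
Definition dot (u v : V3) : R := vx u * vx v + vy u * vy v + vz u * vz v.
Definition vnorm (v : V3) : R := sqrt (dot v v).
Definition vsub (u v : V3) : V3 := mkV3 (vx u - vx v) (vy u - vy v) (vz u - vz v).
Definition det3 (u v w : V3) : R :=
  vx u * (vy v * vz w - vz v * vy w)
  - vy u * (vx v * vz w - vz v * vx w)
  + vz u * (vx v * vy w - vy v * vx w).

Definition dn (r : R -> V3) (n : nat) (s : R) : V3 :=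
  mkV3 (Derive_n (fun t => vx (r t)) n s)
       (Derive_n (fun t => vy (r t)) n s)
       (Derive_n (fun t => vz (r t)) n s).

Definition in_interval (a b : Rbar) (s : R) : Prop :=
  Rbar_lt a (Finite s) /\ Rbar_lt (Finite s) b.

Definition smooth_on (I : R -> Prop) (r : R -> V3) : Prop :=
  forall s, I s -> forall n : nat,
    ex_derive_n (fun t => vx (r t)) n s /\
    ex_derive_n (fun t => vy (r t)) n s /\
    ex_derive_n (fun t => vz (r t)) n s.

(* Curvature and torsion of an arc-length parametrized curve:
   kappa = |r''|,  tau = det(r', r'', r''') / kappa^2 *)
Definition curvature (r : R -> V3) (s : R) : R := vnorm (dn r 2 s).
Definition torsion (r : R -> V3) (s : R) : R :=
  det3 (dn r 1 s) (dn r 2 s) (dn r 3 s) / (curvature r s) ^ 2.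

(* r(I) lies on a circular cylinder of radius rho: for some point c on the
   axis and unit axis direction u, |x - c|^2 - <x - c, u>^2 = rho^2. *)
Definition on_circular_cylinder (I : R -> Prop) (r : R -> V3) (rho : R) : Prop :=
  exists c u : V3, vnorm u = 1 /\
    forall s, I s ->
      dot (vsub (r s) c) (vsub (r s) c) - (dot (vsub (r s) c) u) ^ 2 = rho ^ 2.

(* Main.v *)
Require Import Defs.
From Stdlib Require Import Reals Lra Psatz Classical.
From Coquelicot Require Import Coquelicot.
Open Scope R_scope.

Lemma DnS (f : R -> R) n s : Derive (fun x => Derive_n f n x) s = Derive_n f (S n) s.
Proof. reflexivity. Qed.

Definition VV (f g h : R -> R) (n : nat) (t : R) : V3 :=
  mkV3 (Derive_n f n t) (Derive_n g n t) (Derive_n h n t).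

Definition smooth_at (f g h : R -> R) (s : R) : Prop :=
  forall n, ex_derive (Derive_n f n) s /\ ex_derive (Derive_n g n) s /\ ex_derive (Derive_n h n) s.

Lemma d_dot_c f g h s n w : smooth_at f g h s ->
  is_derive (fun t => dot (VV f g h n t) w) s (dot (VV f g h (S n) s) w).
Proof.
intros H; destruct (H n) as (H1 & H2 & H3); destruct w as [[w1 w2] w3].
unfold dot, VV, vx, vy, vz, mkV3; cbn [fst snd].
auto_derive; [tauto| rewrite !DnS; ring].
Qed.

Lemma d_dot f g h s n m : smooth_at f g h s ->
  is_derive (fun t => dot (VV f g h n t) (VV f g h m t)) s
   (dot (VV f g h (S n) s) (VV f g h m s) + dot (VV f g h n s) (VV f g h (S m) s)).
Proof.
intros H; destruct (H n) as (H1 & H2 & H3); destruct (H m) as (H4 & H5 & H6).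
unfold dot, VV, vx, vy, vz, mkV3; cbn [fst snd].
auto_derive; [tauto| rewrite !DnS; ring].
Qed.

Lemma d_det_c f g h s n m w : smooth_at f g h s ->
  is_derive (fun t => det3 (VV f g h n t) (VV f g h m t) w) s
   (det3 (VV f g h (S n) s) (VV f g h m s) w + det3 (VV f g h n s) (VV f g h (S m) s) w).
Proof.
intros H; destruct (H n) as (H1 & H2 & H3); destruct (H m) as (H4 & H5 & H6); destruct w as [[w1 w2] w3].
unfold det3, VV, vx, vy, vz, mkV3; cbn [fst snd].
auto_derive; [tauto| rewrite !DnS; ring].
Qed.

Lemma d_det3 f g h s n m k : smooth_at f g h s ->
  ex_derive (fun t => det3 (VV f g h n t) (VV f g h m t) (VV f g h k t)) s.
Proof.
intros H; destruct (H n) as (H1 & H2 & H3); destruct (H m) as (H4 & H5 & H6);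
destruct (H k) as (H7 & H8 & H9).
unfold det3, VV, vx, vy, vz, mkV3; cbn [fst snd].
auto_derive; tauto.
Qed.

Lemma d_cyl f g h s c w : smooth_at f g h s ->
  is_derive (fun t => dot (vsub (mkV3 (f t) (g t) (h t)) c) w) s (dot (VV f g h 1 s) w).
Proof.
intros H; destruct (H 0%nat) as (H1 & H2 & H3).
simpl in H1, H2, H3; destruct w as [[w1 w2] w3]; destruct c as [[c1 c2] c3].
unfold dot, VV, vsub, vx, vy, vz, mkV3; cbn [fst snd Derive_n].
auto_derive; [tauto| ring].
Qed.

Lemma d_cyl_xx f g h s c : smooth_at f g h s ->
  is_derive (fun t => dot (vsub (mkV3 (f t) (g t) (h t)) c) (vsub (mkV3 (f t) (g t) (h t)) c)) s
    (2 * dot (VV f g h 1 s) (vsub (mkV3 (f s) (g s) (h s)) c)).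
Proof.
intros H; destruct (H 0%nat) as (H1 & H2 & H3).
simpl in H1, H2, H3; destruct c as [[c1 c2] c3].
unfold dot, VV, vsub, vx, vy, vz, mkV3; cbn [fst snd Derive_n].
auto_derive; [tauto| ring].
Qed.

Lemma d_cyl_xV f g h s c n : smooth_at f g h s ->
  is_derive (fun t => dot (vsub (mkV3 (f t) (g t) (h t)) c) (VV f g h n t)) s
    (dot (VV f g h 1 s) (VV f g h n s) + dot (vsub (mkV3 (f s) (g s) (h s)) c) (VV f g h (S n) s)).
Proof.
intros H; destruct (H 0%nat) as (H1 & H2 & H3); destruct (H n) as (H4 & H5 & H6).
simpl in H1, H2, H3; destruct c as [[c1 c2] c3].
unfold dot, VV, vsub, vx, vy, vz, mkV3; cbn [fst snd].
auto_derive; [tauto| rewrite !DnS; simpl; ring].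
Qed.
Lemma gram (T K w v : V3) :
  (dot T T * dot K K - (dot T K)^2) * dot w v =
  dot w T * dot v T * dot K K + dot w K * dot v K * dot T T
  - dot T K * (dot w T * dot v K + dot w K * dot v T)
  + det3 T K w * det3 T K v.
Proof.
destruct T as [[t1 t2] t3]; destruct K as [[k1 k2] k3];
destruct w as [[w1 w2] w3]; destruct v as [[v1 v2] v3].
unfold dot, det3, vx, vy, vz; cbn [fst snd]. ring.
Qed.

Lemma gram_det (T K w u : V3) :
  (dot T T * dot K K - (dot T K)^2) * det3 T w u =
  (dot T T * dot w K - dot T K * dot w T) * det3 T K u
  + det3 T K w * (dot T K * dot T u - dot T T * dot K u).
Proof.
destruct T as [[t1 t2] t3]; destruct K as [[k1 k2] k3];
destruct w as [[w1 w2] w3]; destruct u as [[v1 v2] v3].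
unfold dot, det3, vx, vy, vz; cbn [fst snd]. ring.
Qed.

Lemma dot_sym u v : dot u v = dot v u.
Proof. unfold dot; ring. Qed.

Lemma det_swap23 T K u : det3 T K u = - det3 T u K.
Proof. unfold det3; ring. Qed.

Lemma det_KK K u : det3 K K u = 0.
Proof. unfold det3; ring. Qed.

Lemma alg_r3u T K W u k2 : dot T T = 1 -> dot T K = 0 -> dot K K = k2 ->
  dot T W = -k2 -> dot K W = 0 ->
  k2 * dot W u = - k2 * k2 * dot T u + det3 T K W * det3 T K u.
Proof.
intros h1 h2 h3 h4 h5.
pose proof (gram T K W u) as G.
rewrite h1, h2, h3, (dot_sym W T), (dot_sym W K), h4, h5, (dot_sym u T) in G.
replace (k2 * dot W u) with ((1*k2 - 0^2)*dot W u) by ring; rewrite G; ring.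
Qed.

Lemma alg_detr3 T K W u k2 : dot T T = 1 -> dot T K = 0 -> dot K K = k2 ->
  dot T W = -k2 -> dot K W = 0 ->
  k2 * det3 T W u = - det3 T K W * dot K u.
Proof.
intros h1 h2 h3 h4 h5.
pose proof (gram_det T K W u) as G.
rewrite h1, h2, h3, (dot_sym W K), h5 in G.
replace (k2 * det3 T W u) with ((1*k2 - 0^2)*det3 T W u) by ring; rewrite G; ring.
Qed.

Lemma alg_F T K u k2 : dot T T = 1 -> dot T K = 0 -> dot K K = k2 -> dot u u = 1 ->
  k2 * (1 - (dot T u)^2) = (dot K u)^2 + (det3 T K u)^2.
Proof.
intros h1 h2 h3 h4.
pose proof (gram T K u u) as G.
rewrite h1, h2, h3, h4, (dot_sym u T), (dot_sym u K) in G.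
nra.
Qed.

Lemma alg_cyl T K u x rho : dot T T = 1 -> dot T K = 0 -> dot u u = 1 ->
  dot x x - (dot x u)^2 = rho^2 ->
  dot x T = dot x u * dot T u ->
  dot x K = (dot T u)^2 - 1 + dot x u * dot K u ->
  rho^2 * (det3 T K u)^2 = (1 - (dot T u)^2)^3.
Proof.
intros h1 h2 h3 h4 h5 h6.
set (a := dot T u) in *.
set (m := 1 - a^2).
pose proof (gram T u x x) as G1.
rewrite h1, h3, (dot_sym x u) in G1. fold a in G1. rewrite h5 in G1.
assert (E1 : m * rho^2 = (det3 T u x)^2).
{ unfold m. rewrite <- h4. rewrite (dot_sym u x) in G1. nra. }
pose proof (gram T u x K) as G2.
rewrite h1, h3, (dot_sym K T), h2, (dot_sym x u), h5, h6 in G2. fold a in G2.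
assert (E2 : m^2 = det3 T u x * det3 T K u).
{ rewrite (det_swap23 T K u). unfold m. rewrite (dot_sym u x) in G2. rewrite (dot_sym K u) in G2. nra. }
pose proof (gram T u K K) as G3.
rewrite h1, h3, (dot_sym K T), h2 in G3. fold a in G3.
assert (E3 : m * dot K K = (dot K u)^2 + (det3 T K u)^2).
{ rewrite (det_swap23 T K u). unfold m. nra. }
fold m.
destruct (Req_dec m 0) as [Hm|Hm].
- rewrite Hm in E3 |- *.
  assert (0 <= (dot K u)^2) by nra.
  assert (0 <= (det3 T K u)^2) by nra.
  assert ((det3 T K u)^2 = 0) by lra.
  rewrite H1. ring.
- assert (m^4 = m * rho^2 * (det3 T K u)^2).
  { replace (m^4) with ((m^2)^2) by ring. rewrite E2, E1. ring. }
  apply Rmult_eq_reg_l with m; auto. nra.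
Qed.
Lemma loc_I a b s : in_interval a b s -> locally s (in_interval a b).
Proof.
intros [H1 H2]. apply (locally_interval _ s a b H1 H2). intros y Hy1 Hy2; split; auto.
Qed.

Lemma deriv_loc_const (g : R -> R) k s l : locally s (fun t => g t = k) ->
  is_derive g s l -> l = 0.
Proof.
intros Hl Hd.
assert (Hd' : is_derive (fun _ => k) s l).
{ apply (is_derive_ext_loc g); auto. }
apply is_derive_unique in Hd'. rewrite <- Hd'. apply Derive_const.
Qed.

Lemma deriv_const_I a b (g : R -> R) k s l : (forall t, in_interval a b t -> g t = k) ->
  in_interval a b s -> is_derive g s l -> l = 0.
Proof.
intros H Hs Hd. apply (deriv_loc_const g k s l); auto.
apply (filter_imp (in_interval a b)); auto. apply loc_I; auto.
Qed.

Lemma deriv_eq_I a b (g h : R -> R) s l : (forall t, in_interval a b t -> g t = h t) ->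
  in_interval a b s -> is_derive g s l -> is_derive h s l.
Proof.
intros H Hs Hd. apply (is_derive_ext_loc g); auto.
apply (filter_imp (in_interval a b)); auto. apply loc_I; auto.
Qed.

Lemma interval_conv a b s1 s2 x : in_interval a b s1 -> in_interval a b s2 ->
  Rmin s1 s2 <= x <= Rmax s1 s2 -> in_interval a b x.
Proof.
intros [A1 B1] [A2 B2] [X1 X2].
assert (Hm : Rbar_lt a (Rmin s1 s2)).
{ unfold Rmin; destruct (Rle_dec s1 s2); auto. }
assert (HM : Rbar_lt (Rmax s1 s2) b).
{ unfold Rmax; destruct (Rle_dec s1 s2); auto. }
split.
- destruct a as [a| |]; simpl in *; auto; lra.
- destruct b as [b| |]; simpl in *; auto; lra.
Qed.

Lemma const_I a b (g : R -> R) : (forall t, in_interval a b t -> is_derive g t 0) ->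
  forall s1 s2, in_interval a b s1 -> in_interval a b s2 -> g s1 = g s2.
Proof.
intros H s1 s2 H1 H2.
destruct (MVT_gen g s1 s2 (fun _ => 0)) as [c [Hc Heq]].
- intros x Hx. apply H. apply (interval_conv a b s1 s2); auto; lra.
- intros x Hx. apply continuity_pt_filterlim. apply (ex_derive_continuous g).
  exists 0. apply H. apply (interval_conv a b s1 s2); auto.
- lra.
Qed.

Lemma loc_neq0 (g : R -> R) s l : is_derive g s l -> g s <> 0 ->
  locally s (fun t => g t <> 0).
Proof.
intros Hd Hn.
assert (Hc : continuity_pt g s).
{ apply continuity_pt_filterlim. apply (ex_derive_continuous g). exists l; auto. }
rewrite continuity_pt_locally in Hc.
assert (Hp : 0 < Rabs (g s)) by (apply Rabs_pos_lt; auto).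
specialize (Hc (mkposreal _ Hp)).
revert Hc. apply filter_imp. simpl. intros t Ht Hz. rewrite Hz in Ht.
rewrite Rminus_0_l, Rabs_Ropp in Ht. lra.
Qed.

Lemma sqrt_eq_sq x k : 0 <= x -> sqrt x = k -> x = k^2.
Proof. intros H1 H2. rewrite <- H2. simpl. rewrite Rmult_1_r, sqrt_sqrt; auto. Qed.

Lemma dot_pos v : 0 <= dot v v.
Proof. unfold dot. nra. Qed.

Ltac fixD p dp H := replace (Derive (fun x => p x) _) with dp by (symmetry; apply is_derive_unique; exact H).
Lemma Lpoly1 (p q : R -> R) s dp dq rho : is_derive p s dp -> is_derive q s dq ->
  is_derive (fun t => rho^2 * q t ^2 - (1 - p t^2)^3) s
    (rho^2 * (2 * q s * dq) - 3 * (1 - p s^2)^2 * (- (2 * p s * dp))).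
Proof.
intros Hp Hq.
assert (ep : ex_derive p s) by (exists dp; auto).
assert (eq : ex_derive q s) by (exists dq; auto).
auto_derive; [tauto|].
fixD p dp Hp; fixD q dq Hq; ring.
Qed.

Lemma Lpoly2 (p q : R -> R) s dp dq rho : is_derive p s dp -> is_derive q s dq ->
  is_derive (fun t => rho^2 * q t ^2 - 9 * (1 - p t^2) * p t^2) s
    (rho^2 * (2 * q s * dq) - 9 * ((- (2 * p s * dp)) * p s^2 + (1 - p s^2) * (2 * p s * dp))).
Proof.
intros Hp Hq.
assert (ep : ex_derive p s) by (exists dp; auto).
assert (eq : ex_derive q s) by (exists dq; auto).
auto_derive; [tauto|].
fixD p dp Hp; fixD q dq Hq; ring.
Qed.

Lemma Lprod (p q w : R -> R) s dp dq dw k : is_derive p s dp -> is_derive q s dq ->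
  is_derive w s dw ->
  is_derive (fun t => k * p t - q t * w t) s (k * dp - (dq * w s + q s * dw)).
Proof.
intros Hp Hq Hw.
assert (ep : ex_derive p s) by (exists dp; auto).
assert (eq : ex_derive q s) by (exists dq; auto).
assert (ew : ex_derive w s) by (exists dw; auto).
auto_derive; [tauto|].
fixD p dp Hp; fixD q dq Hq; fixD w dw Hw; ring.
Qed.

Lemma Lsq (p : R -> R) s dp : is_derive p s dp ->
  is_derive (fun t => p t ^ 2) s (2 * p s * dp).
Proof.
intros Hp. assert (ep : ex_derive p s) by (exists dp; auto).
auto_derive; [tauto|]. fixD p dp Hp; ring.
Qed.

Lemma Lcyl (p q w : R -> R) s dp dq dw : is_derive p s dp -> is_derive q s dq ->
  is_derive w s dw ->
  is_derive (fun t => p t - q t * w t) s (dp - (dq * w s + q s * dw)).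
Proof.
intros Hp Hq Hw.
assert (ep : ex_derive p s) by (exists dp; auto).
assert (eq : ex_derive q s) by (exists dq; auto).
assert (ew : ex_derive w s) by (exists dw; auto).
auto_derive; [tauto|].
fixD p dp Hp; fixD q dq Hq; fixD w dw Hw; ring.
Qed.

Lemma Ldivc (p : R -> R) s dp k : is_derive p s dp ->
  is_derive (fun t => p t / k) s (dp / k).
Proof.
intros Hp. assert (ep : ex_derive p s) by (exists dp; auto).
unfold Rdiv. auto_derive; [tauto|]. fixD p dp Hp; ring.
Qed.

Lemma eta3 (v : V3) : mkV3 (vx v) (vy v) (vz v) = v.
Proof. destruct v as [[x y] z]; reflexivity. Qed.

Definition aF r u t := dot (dn r 1 t) u.
Definition apF r u t := dot (dn r 2 t) u.
Definition D3F r u t := det3 (dn r 1 t) (dn r 2 t) u.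
Definition EF r u rho t := rho^2 * torsion r t ^2 - 9 * (1 - aF r u t^2) * aF r u t^2.

Theorem theorem3p2 (a b : Rbar) (r : R -> V3) (rho kappa0 : R) :
  Rbar_lt a b ->
  smooth_on (in_interval a b) r ->
  (forall s, in_interval a b s -> vnorm (dn r 1 s) = 1) ->
  (forall s, in_interval a b s -> torsion r s <> 0) ->
  0 < rho ->
  on_circular_cylinder (in_interval a b) r rho ->
  kappa0 <> 0 ->
  (forall s, in_interval a b s -> curvature r s = kappa0) ->
  (exists t0 : R, forall s, in_interval a b s -> torsion r s = t0)
  \/
  ((~ exists t0 : R, forall s, in_interval a b s -> torsion r s = t0) /\
   (forall s, in_interval a b s ->
      9 - 4 * rho ^ 2 * (torsion r s) ^ 2 <> 0 ->
      exists eps : R, (eps = 1 \/ eps = -1) /\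
        rho ^ 4 * (Derive (torsion r) s) ^ 2 / (9 - 4 * rho ^ 2 * (torsion r s) ^ 2)
        = rho ^ 2 * kappa0 ^ 2 - 1 / 2 + rho ^ 2 * (torsion r s) ^ 2 / 9
          - eps * (1 / 6) * sqrt (9 - 4 * rho ^ 2 * (torsion r s) ^ 2)) /\
   (forall s, in_interval a b s -> Rabs (torsion r s) <= 3 / (2 * rho))).
Proof.
intros Hab Hsm Hunit Htor Hrho Hcyl Hk0 Hcurv.
destruct Hcyl as (c & u & Hu & Hc).
set (I := in_interval a b) in *.
set (fx := fun t => vx (r t)) in *.
set (fy := fun t => vy (r t)) in *.
set (fz := fun t => vz (r t)) in *.
assert (HS : forall s, I s -> smooth_at fx fy fz s).
{ intros s Hs n. destruct (Hsm s Hs (S n)) as (h1 & h2 & h3). exact (conj h1 (conj h2 h3)). }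
assert (Hu' : dot u u = 1).
{ unfold vnorm in Hu. apply sqrt_eq_sq in Hu; [lra | apply dot_pos]. }
assert (P1 : forall s, I s -> dot (dn r 1 s) (dn r 1 s) = 1).
{ intros s Hs. pose proof (Hunit s Hs) as e. unfold vnorm in e.
  apply sqrt_eq_sq in e; [lra | apply dot_pos]. }
assert (P3 : forall s, I s -> dot (dn r 2 s) (dn r 2 s) = kappa0^2).
{ intros s Hs. pose proof (Hcurv s Hs) as e. unfold curvature, vnorm in e.
  apply sqrt_eq_sq in e; [lra | apply dot_pos]. }
assert (P2 : forall s, I s -> dot (dn r 1 s) (dn r 2 s) = 0).
{ intros s Hs. pose proof (d_dot fx fy fz s 1 1 (HS s Hs)) as D.
  pose proof (deriv_const_I a b _ 1 s _ P1 Hs D) as E.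
  change (VV fx fy fz) with (dn r) in E. rewrite (dot_sym (dn r 2 s)) in E. lra. }
assert (P4 : forall s, I s -> dot (dn r 1 s) (dn r 3 s) = - kappa0^2).
{ intros s Hs. pose proof (d_dot fx fy fz s 1 2 (HS s Hs)) as D.
  pose proof (deriv_const_I a b _ 0 s _ P2 Hs D) as E.
  change (VV fx fy fz) with (dn r) in E. rewrite (P3 s Hs) in E. lra. }
assert (P5 : forall s, I s -> dot (dn r 2 s) (dn r 3 s) = 0).
{ intros s Hs. pose proof (d_dot fx fy fz s 2 2 (HS s Hs)) as D.
  pose proof (deriv_const_I a b _ _ s _ P3 Hs D) as E.
  change (VV fx fy fz) with (dn r) in E. rewrite (dot_sym (dn r 3 s)) in E. lra. }
assert (Ptor : forall s, I s -> torsion r s = det3 (dn r 1 s) (dn r 2 s) (dn r 3 s) / kappa0^2).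
{ intros s Hs. unfold torsion. rewrite (Hcurv s Hs). reflexivity. }
assert (Hk2 : kappa0^2 <> 0) by (apply pow_nonzero; auto).
set (xF := fun t => vsub (mkV3 (fx t) (fy t) (fz t)) c).
assert (Cyl : forall t, I t -> dot (xF t) (xF t) - dot (xF t) u * dot (xF t) u = rho^2).
{ intros t Ht. rewrite <- (Hc t Ht). unfold xF, fx, fy, fz. rewrite eta3. ring. }
assert (C1 : forall s, I s -> dot (xF s) (dn r 1 s) = dot (xF s) u * aF r u s).
{ intros s Hs.
  pose proof (Lcyl (fun t => dot (xF t) (xF t)) (fun t => dot (xF t) u) (fun t => dot (xF t) u) s _ _ _
     (d_cyl_xx fx fy fz s c (HS s Hs)) (d_cyl fx fy fz s c u (HS s Hs)) (d_cyl fx fy fz s c u (HS s Hs))) as D.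
  pose proof (deriv_const_I a b _ _ s _ Cyl Hs D) as E.
  change (VV fx fy fz) with (dn r) in E. fold (xF s) in E. unfold aF.
  rewrite (dot_sym (dn r 1 s) (xF s)) in E. lra. }
assert (C2 : forall s, I s -> dot (xF s) (dn r 2 s) = (aF r u s)^2 - 1 + dot (xF s) u * apF r u s).
{ intros s Hs.
  pose proof (Lcyl (fun t => dot (xF t) (dn r 1 t)) (fun t => dot (xF t) u) (aF r u) s _ _ _
     (d_cyl_xV fx fy fz s c 1 (HS s Hs)) (d_cyl fx fy fz s c u (HS s Hs)) (d_dot_c fx fy fz s 1 u (HS s Hs))) as D.
  assert (E : (dot (VV fx fy fz 1 s) (VV fx fy fz 1 s) + dot (vsub (mkV3 (fx s) (fy s) (fz s)) c) (VV fx fy fz 2 s) -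
       (dot (VV fx fy fz 1 s) u * aF r u s + dot (vsub (mkV3 (fx s) (fy s) (fz s)) c) u * dot (VV fx fy fz 2 s) u)) = 0).
  { apply (deriv_const_I a b (fun t => dot (xF t) (dn r 1 t) - dot (xF t) u * aF r u t) 0 s).
    - intros t Ht. rewrite (C1 t Ht). ring.
    - exact Hs.
    - exact D. }
  change (VV fx fy fz) with (dn r) in E. fold (xF s) in E. unfold aF, apF in *.
  rewrite (P1 s Hs) in E. lra. }
assert (Q1 : forall s, I s -> rho^2 * D3F r u s ^2 - (1 - aF r u s^2)^3 = 0).
{ intros s Hs. unfold D3F, aF.
  rewrite (alg_cyl (dn r 1 s) (dn r 2 s) u (xF s) rho (P1 s Hs) (P2 s Hs) Hu'); [ring| | |].
  - rewrite <- (Cyl s Hs). ring.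
  - apply C1; auto.
  - apply C2; auto. }
assert (Ha : forall s, I s -> is_derive (aF r u) s (apF r u s)).
{ intros s Hs. exact (d_dot_c fx fy fz s 1 u (HS s Hs)). }
assert (Hap : forall s, I s -> is_derive (apF r u) s (dot (dn r 3 s) u)).
{ intros s Hs. exact (d_dot_c fx fy fz s 2 u (HS s Hs)). }
assert (HD : forall s, I s -> is_derive (D3F r u) s (det3 (dn r 1 s) (dn r 3 s) u)).
{ intros s Hs. pose proof (d_det_c fx fy fz s 1 2 u (HS s Hs)) as D.
  rewrite det_KK, Rplus_0_l in D. exact D. }
assert (Htau : forall s, I s -> is_derive (torsion r) s (Derive (torsion r) s)).
{ intros s Hs. apply Derive_correct.
  destruct (d_det3 fx fy fz s 1 2 3 (HS s Hs)) as [l Hl].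
  exists (l / kappa0^2).
  apply (deriv_eq_I a b (fun t => det3 (dn r 1 t) (dn r 2 t) (dn r 3 t) / kappa0^2)); auto.
  - intros t Ht. symmetry. apply Ptor; auto.
  - apply Ldivc. exact Hl. }
assert (Q3 : forall s, I s -> det3 (dn r 1 s) (dn r 3 s) u = - torsion r s * apF r u s).
{ intros s Hs. pose proof (alg_detr3 (dn r 1 s) (dn r 2 s) (dn r 3 s) u (kappa0^2)
     (P1 s Hs) (P2 s Hs) (P3 s Hs) (P4 s Hs) (P5 s Hs)) as A.
  rewrite (Ptor s Hs). unfold apF.
  apply (Rmult_eq_reg_l (kappa0^2)); auto. rewrite A. field. auto. }
assert (Q4 : forall s, I s -> dot (dn r 3 s) u = - kappa0^2 * aF r u s + torsion r s * D3F r u s).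
{ intros s Hs. pose proof (alg_r3u (dn r 1 s) (dn r 2 s) (dn r 3 s) u (kappa0^2)
     (P1 s Hs) (P2 s Hs) (P3 s Hs) (P4 s Hs) (P5 s Hs)) as A.
  rewrite (Ptor s Hs). unfold aF, D3F.
  apply (Rmult_eq_reg_l (kappa0^2)); auto. rewrite A. field. auto. }
assert (Q5 : forall s, I s -> kappa0^2 * (1 - aF r u s^2) = apF r u s ^2 + D3F r u s^2).
{ intros s Hs. apply alg_F; auto. }
assert (G : forall s, I s -> apF r u s * (rho^2 * D3F r u s * torsion r s - 3 * (1 - aF r u s^2)^2 * aF r u s) = 0).
{ intros s Hs.
  pose proof (Lpoly1 (aF r u) (D3F r u) s _ _ rho (Ha s Hs) (HD s Hs)) as D.
  pose proof (deriv_const_I a b _ 0 s _ Q1 Hs D) as E.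
  rewrite (Q3 s Hs) in E. nra. }
assert (HE : forall s, I s -> is_derive (EF r u rho) s
   (rho^2 * (2 * torsion r s * Derive (torsion r) s) - 9 * ((- (2 * aF r u s * apF r u s)) * aF r u s^2
      + (1 - aF r u s^2) * (2 * aF r u s * apF r u s)))).
{ intros s Hs. exact (Lpoly2 (aF r u) (torsion r) s _ _ rho (Ha s Hs) (Htau s Hs)). }
assert (KC : forall s, I s -> EF r u rho s <> 0 -> Derive (torsion r) s = 0 /\ apF r u s = 0).
{ intros s Hs HE0.
  pose proof (loc_neq0 (EF r u rho) s _ (HE s Hs) HE0) as L1.
  pose proof (filter_and _ _ (loc_I a b s Hs) L1) as L2.
  assert (L3 : locally s (fun t => apF r u t = 0)).
  { revert L2. apply filter_imp. intros t [Ht Hne].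
    destruct (Req_dec (apF r u t) 0) as [h|h]; auto. exfalso. apply Hne.
    pose proof (G t Ht) as Gt. apply Rmult_integral in Gt. destruct Gt as [Gt|Gt]; [contradiction|].
    pose proof (Q1 t Ht) as Q1t. pose proof (Q5 t Ht) as Q5t.
    unfold EF. set (A := aF r u t) in *. set (Dd := D3F r u t) in *. set (ta := torsion r t) in *.
    set (m := 1 - A^2) in *.
    assert (Hm : 0 < m).
    { assert (0 < kappa0^2) by (apply pow2_gt_0; auto). nra. }
    assert (H3 : m^3 * (rho^2 * ta^2 - 9 * m * A^2) = 0).
    { replace (m^3 * (rho^2 * ta^2 - 9 * m * A^2)) with
        ((rho^2*Dd*ta)^2 - 9*m^4*A^2 - (rho^2 * Dd^2 - m^3)*rho^2*ta^2) by ring.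
      replace (rho^2*Dd*ta) with (3*m^2*A) by lra.
      replace (rho^2 * Dd^2 - m^3) with 0 by lra. ring. }
    apply Rmult_integral in H3. destruct H3 as [H3|H3].
    - exfalso. apply (pow_nonzero m 3); lra.
    - lra. }
  pose proof (locally_singleton _ _ L3) as Has. simpl in Has.
  pose proof (locally_locally _ _ L3) as L4.
  assert (L5 : locally s (fun t => kappa0^2 * aF r u t - torsion r t * D3F r u t = 0)).
  { pose proof (filter_and _ _ L4 (loc_I a b s Hs)) as L45. revert L45. apply filter_imp.
    intros t [Hl Ht].
    pose proof (deriv_loc_const (apF r u) 0 t _ Hl (Hap t Ht)) as W0.
    rewrite (Q4 t Ht) in W0. lra. }
  pose proof (Lprod (aF r u) (torsion r) (D3F r u) s _ _ _ (kappa0^2) (Ha s Hs) (Htau s Hs) (HD s Hs)) as D6.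
  pose proof (deriv_loc_const _ 0 s _ L5 D6) as E6.
  rewrite (Q3 s Hs), Has in E6.
  pose proof (locally_singleton _ _ L5) as L5s. simpl in L5s.
  pose proof (Q5 s Hs) as Q5s. rewrite Has in Q5s.
  split; auto.
  destruct (Req_dec (D3F r u s) 0) as [hd|hd].
  - exfalso. rewrite hd in Q5s, L5s.
    assert (aF r u s = 0).
    { apply (Rmult_eq_reg_l (kappa0^2)); auto. lra. }
    rewrite H in Q5s. apply Hk2. lra.
  - apply (Rmult_eq_reg_r (D3F r u s)); auto. lra. }
assert (Lsq0 : forall s, I s -> is_derive (fun t => EF r u rho t ^2) s 0).
{ intros s Hs. pose proof (Lsq _ s _ (HE s Hs)) as H.
  match type of H with is_derive _ _ ?v => replace v with 0 in H end; auto.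
  destruct (Req_dec (EF r u rho s) 0) as [h|h].
  - rewrite h. ring.
  - destruct (KC s Hs h) as [h1 h2]. rewrite h1, h2. ring. }
destruct (classic (exists t0, forall s, I s -> torsion r s = t0)) as [Hc0|Hnc].
{ left. exact Hc0. }
right.
assert (HE0 : forall s, I s -> EF r u rho s = 0).
{ intros s Hs. destruct (Req_dec (EF r u rho s) 0) as [h|h]; auto.
  exfalso. apply Hnc. exists (torsion r s).
  assert (Hall : forall t, I t -> EF r u rho t <> 0).
  { intros t Ht Hz. pose proof (const_I a b _ Lsq0 t s Ht Hs) as e. simpl in e.
    rewrite Hz in e. apply h. nra. }
  intros t Ht.
  apply (const_I a b (torsion r)); auto.
  intros t' Ht'. pose proof (Htau t' Ht') as D. destruct (KC t' Ht' (Hall t' Ht')) as [h1 _].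
  rewrite h1 in D. exact D. }
split; [exact Hnc|]. split.
- intros s Hs HDn.
  pose proof (deriv_const_I a b _ 0 s _ HE0 Hs (HE s Hs)) as E'.
  pose proof (HE0 s Hs) as E0. unfold EF in E0.
  pose proof (Q1 s Hs) as Q1s. pose proof (Q5 s Hs) as Q5s. pose proof (Htor s Hs) as Ht0.
  set (A := aF r u s) in *. set (Dd := D3F r u s) in *. set (ta := torsion r s) in *.
  set (tp := Derive (torsion r) s) in *. set (ap := apF r u s) in *.
  set (m := 1 - A^2) in *.
  assert (Hrel : rho^2 * ta * tp = 9 * A * ap * (2*m - 1)).
  { unfold m in *. nra. }
  assert (Hta2 : rho^2 * ta^2 = 9 * m * A^2) by (unfold m in *; lra).
  assert (HmA : m * A^2 <> 0).
  { intro z. apply Ht0. assert (H0 : rho^2 * ta^2 = 0) by nra.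
    apply Rmult_integral in H0. destruct H0 as [H0|H0].
    - exfalso. apply (pow_nonzero rho 2); lra.
    - destruct (Req_dec ta 0) as [hz|hz]; auto. exfalso; apply (pow_nonzero ta 2); auto. }
  assert (Hm0 : m <> 0). { intro z. apply HmA. rewrite z. ring. }
  assert (H1 : m * (rho^2 * tp^2) = 9 * ap^2 * (2*m-1)^2).
  { apply (Rmult_eq_reg_l (9 * m * A^2)). 2:{ intro z. apply HmA. lra. }
    replace (9 * m * A ^ 2 * (m * (rho ^ 2 * tp ^ 2))) with (m * (rho^2 * ta^2) * (rho^2 * tp^2)) by (rewrite Hta2; ring).
    replace (m * (rho^2 * ta^2) * (rho^2 * tp^2)) with (m * (rho^2 * ta * tp)^2 * rho^2 / rho^2) by (field; lra).
    rewrite Hrel. field. lra. }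
  assert (H2 : rho^4 * tp^2 = 9 * (2*m-1)^2 * (rho^2 * kappa0^2 - m^2)).
  { apply (Rmult_eq_reg_l m); auto.
    replace (m * (rho^4 * tp^2)) with (rho^2 * (m * (rho^2 * tp^2))) by ring.
    rewrite H1.
    replace (ap^2) with (kappa0^2 * m - Dd^2) by lra.
    replace (rho ^ 2 * (9 * (kappa0 ^ 2 * m - Dd ^ 2) * (2 * m - 1) ^ 2)) with
      (9 * (2*m-1)^2 * (rho^2 * kappa0^2 * m - rho^2 * Dd^2)) by ring.
    replace (rho^2 * Dd^2) with (m^3) by lra. ring. }
  assert (HDv : 9 - 4 * rho ^ 2 * ta ^ 2 = (3 * (2*m-1))^2).
  { replace (4 * rho ^ 2 * ta ^ 2) with (4 * (rho ^ 2 * ta ^ 2)) by ring. rewrite Hta2. unfold m. ring. }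
  assert (Hsq : sqrt (9 - 4 * rho ^ 2 * ta ^ 2) = Rabs (3 * (2*m-1))).
  { rewrite HDv, <- Rsqr_pow2. apply sqrt_Rsqr_abs. }
  rewrite Hsq.
  destruct (Rle_dec 0 (3 * (2*m-1))) as [hp|hn].
  + exists 1. split; [left; reflexivity|].
    rewrite Rabs_right by lra. rewrite H2, HDv.
    replace (rho ^ 2 * ta ^ 2 / 9) with (m * A^2) by (rewrite Hta2; field).
    assert (hz : 2 * m - 1 <> 0) by (intro z; apply HDn; rewrite HDv, z; ring).
    unfold m in *. field. auto.
  + exists (-1). split; [right; reflexivity|].
    rewrite Rabs_left by lra. rewrite H2, HDv.
    replace (rho ^ 2 * ta ^ 2 / 9) with (m * A^2) by (rewrite Hta2; field).
    assert (hz : 2 * m - 1 <> 0) by (intro z; apply HDn; rewrite HDv, z; ring).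
    unfold m in *. field. auto.
- intros s Hs. pose proof (HE0 s Hs) as E0. unfold EF in E0.
  set (A := aF r u s) in *. set (ta := torsion r s) in *.
  assert (h1 : (rho * Rabs ta)^2 <= (3/2)^2).
  { rewrite Rpow_mult_distr, pow2_abs. assert (0 <= (2*A^2-1)^2) by apply pow2_ge_0. nra. }
  assert (h2 : rho * Rabs ta <= 3/2).
  { assert (0 <= rho * Rabs ta) by (apply Rmult_le_pos; [lra| apply Rabs_pos]). nra. }
  apply Rmult_le_reg_l with rho; auto.
  replace (rho * (3 / (2 * rho))) with (3/2) by (field; lra). lra.
Qed.
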